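(* Let $p$ be a prime, $D$ the quaternion algebra over $\mathbb{Q}$ ramified exactly at $\{p,\infty\}$, $\mathcal{O}$ a maximal order, $U_1=\prod_q\mathrm{Stab}_{\mathrm{GU}_2(D_q)}(\mathcal{O}_q^2)\subset\mathrm{GU}_2(D_{\mathbb{A}_f})$ and $\Gamma^{(1)}=\mathrm{GU}_2(D)\cap U_1$. Then \[\Gamma^{(1)}=\mathrm{SU}_2(D)\cap\mathrm{GL}_2(\mathcal{O})=\mathrm{GU}_2(\mathcal{O}),\] where $\mathrm{GU}_2(\mathcal{O})=\{\gamma\in\mathrm{GU}_2(D)\cap M_2(\mathcal{O}):\mu(\gamma)\in\mathbb{Z}^\times\}$.
   Context: Quaternion conjugation $x\mapsto\overline{x}$; $\overline{g}^T$ is the transpose of the entrywise conjugate. $\mathrm{GU}_2(D)=\{g\in M_2(D): g\overline{g}^T=\mu(g)I,\ \mu(g)\in\mathbb{Q}^\times\}$, $\mathrm{SU}_2(D)$ its elements of similitude $1$. $\mathrm{GL}_2(\mathcal{O})$ is the group of matrices in $M_2(\mathcal{O})$ with inverse in $M_2(\mathcal{O})$. For each prime $q$, $D_q=D\otimes\mathbb{Q}_q$, $\mathcal{O}_q=\mathcal{O}\otimes\mathbb{Z}_q$, $\mathrm{GU}_2(D_q)$ defined analogously with $\mu\in\mathbb{Q}_q^\times$; $\mathrm{GU}_2(D_{\mathbb{A}_f})$ is the restricted product of the $\mathrm{GU}_2(D_q)$ with respect to $\mathrm{GU}_2(D_q)\cap\mathrm{GL}_2(\mathcal{O}_q)$,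 with $\mathrm{GU}_2(D)$ embedded diagonally. $\mathcal{O}_q^2$ consists of row vectors, with stabilizer taken under right multiplication. *)

(* Defs.v *)
From mathcomp Require Import all_boot all_order all_algebra.
Set Implicit Arguments. Unset Strict Implicit. Unset Printing Implicit Defensive.
Import Order.TTheory GRing.Theory Num.Theory.
Local Open Scope ring_scope.

(* Elements x0 + x1 i + x2 j + x3 k stored as row vectors in Q^4,
   with i^2 = a, j^2 = b, k = ij = -ji (a, b nonzero rationals).
   Every quaternion algebra over Q is of this form. *)
Definition quat := 'rV[rat]_4.

Definition qc (x : quat) (k : nat) : rat := x ord0 (inord k).

Definition mkQ (x0 x1 x2 x3 : rat) : quat :=
  \row_(i < 4) nth 0 [:: x0; x1; x2; x3] i.

Definition qmul (a b : rat) (x y : quat) : quat :=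
  let x0 := qc x 0%N in let x1 := qc x 1%N in let x2 := qc x 2%N in let x3 := qc x 3%N in
  let y0 := qc y 0%N in let y1 := qc y 1%N in let y2 := qc y 2%N in let y3 := qc y 3%N in
  mkQ (x0 * y0 + a * x1 * y1 + b * x2 * y2 - a * b * x3 * y3)
      (x0 * y1 + x1 * y0 - b * x2 * y3 + b * x3 * y2)
      (x0 * y2 + x2 * y0 + a * x1 * y3 - a * x3 * y1)
      (x0 * y3 + x3 * y0 + x1 * y2 - x2 * y1).

Definition qconj (x : quat) : quat :=
  mkQ (qc x 0%N) (- qc x 1%N) (- qc x 2%N) (- qc x 3%N).

Definition qscal (r : rat) : quat := mkQ r 0 0 0.

(* D ramified at infinity iff D (x) R is Hamilton's quaternions iff a<0 and b<0. *)
Definition ramified_at_infty (a b : rat) : Prop := a < 0 /\ b < 0.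

(* D splits at the prime q iff the norm form of the pure part, i.e. the ternary
   form z^2 = a x^2 + b y^2, has a nontrivial zero over Q_q; after clearing
   denominators, equivalently (compactness of Z_q) a primitive zero modulo
   q^k for every k. *)
Definition split_at (a b : rat) (q : nat) : Prop :=
  let A := numq a * denq b in
  let B := numq b * denq a in
  let C := denq a * denq b in
  forall k : nat, exists x y z : int,
    ~~ [&& (q%:Z %| x)%Z, (q%:Z %| y)%Z & (q%:Z %| z)%Z] /\
    (((q ^ k)%N)%:Z %| A * x ^+ 2 + B * y ^+ 2 - C * z ^+ 2)%Z.

Definition ramified_at (a b : rat) (q : nat) : Prop := ~ split_at a b q.

Definition ramified_exactly_at_p_infty (a b : rat) (p : nat) : Prop :=
  ramified_at_infty a b /\ ramified_at a b p /\
  (forall q : nat, prime q -> q <> p -> ~ ramified_at a b q).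

Definition in_lattice (B : 'I_4 -> quat) (x : quat) : Prop :=
  exists c : 'I_4 -> int, x = \sum_(i < 4) (c i)%:~R *: B i.

(* an order: a full Z-lattice in D (basis Q-linearly independent) that is a
   subring containing 1 *)
Definition is_order (a b : rat) (B : 'I_4 -> quat) : Prop :=
  \det (\matrix_(i < 4, j < 4) B i ord0 j) != 0 /\
  in_lattice B (qscal 1) /\
  (forall x y, in_lattice B x -> in_lattice B y -> in_lattice B (qmul a b x y)).

Definition is_maximal_order (a b : rat) (B : 'I_4 -> quat) : Prop :=
  is_order a b B /\
  forall B' : 'I_4 -> quat, is_order a b B' ->
    (forall x, in_lattice B x -> in_lattice B' x) ->
    forall x, in_lattice B' x -> in_lattice B x.

(* O_(q) = O (x) Z_(q) = D cap O_q : elements with a denominator prime to q *)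
Definition loc_at (B : 'I_4 -> quat) (q : nat) (x : quat) : Prop :=
  exists d : nat, (0 < d)%N /\ ~~ (q %| d)%N /\ in_lattice B (d%:R *: x).

Definition M2 := 'I_2 -> 'I_2 -> quat.

Definition mmul (a b : rat) (g h : M2) : M2 :=
  fun i j => \sum_(k < 2) qmul a b (g i k) (h k j).

Definition conjT (g : M2) : M2 := fun i j => qconj (g j i).

Definition scalM (r : rat) : M2 := fun i j => if i == j then qscal r else 0.

Definition meq (g h : M2) : Prop := forall i j, g i j = h i j.

Definition simil (a b : rat) (g : M2) (mu : rat) : Prop :=
  meq (mmul a b g (conjT g)) (scalM mu).

Definition in_GU2 (a b : rat) (g : M2) : Prop :=
  exists mu : rat, mu != 0 /\ simil a b g mu.

Definition in_SU2 (a b : rat) (g : M2) : Prop := simil a b g 1.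

Definition in_M2O (B : 'I_4 -> quat) (g : M2) : Prop :=
  forall i j, in_lattice B (g i j).

Definition in_GL2O (a b : rat) (B : 'I_4 -> quat) (g : M2) : Prop :=
  in_M2O B g /\ exists h : M2, in_M2O B h /\
    meq (mmul a b g h) (scalM 1) /\ meq (mmul a b h g) (scalM 1).

Definition in_GU2O (a b : rat) (B : 'I_4 -> quat) (g : M2) : Prop :=
  in_GU2 a b g /\ in_M2O B g /\
  exists mu : rat, simil a b g mu /\ (mu = 1 \/ mu = -1).

(* row vectors, right action *)
Definition vmul (a b : rat) (v : 'I_2 -> quat) (g : M2) : 'I_2 -> quat :=
  fun j => \sum_(k < 2) qmul a b (v k) (g k j).

Definition stab_loc (a b : rat) (B : 'I_4 -> quat) (q : nat) (g : M2) : Prop :=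
  (forall v : 'I_2 -> quat, (forall i, loc_at B q (v i)) ->
      forall j, loc_at B q (vmul a b v g j)) /\
  (forall w : 'I_2 -> quat, (forall i, loc_at B q (w i)) ->
      exists v : 'I_2 -> quat, (forall i, loc_at B q (v i)) /\
        forall j, vmul a b v g j = w j).

(* Gamma^(1) = GU_2(D) cap U_1 (GU_2(D) embedded diagonally) *)
Definition in_Gamma1 (a b : rat) (B : 'I_4 -> quat) (g : M2) : Prop :=
  in_GU2 a b g /\ forall q : nat, prime q -> stab_loc a b B q g.

(* Main.v *)
Require Import Defs.
From mathcomp Require Import all_boot all_order all_algebra.
From mathcomp Require Import ring lra zify.
Set Implicit Arguments. Unset Strict Implicit. Unset Printing Implicit Defensive.
Import Order.TTheory GRing.Theory Num.Theory.
Local Open Scope ring_scope.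

Section Q.
Variables a b : rat.

Lemma qc_mkQ0 x0 x1 x2 x3 : qc (mkQ x0 x1 x2 x3) 0 = x0.
Proof. by rewrite /qc /mkQ mxE inordK. Qed.
Lemma qc_mkQ1 x0 x1 x2 x3 : qc (mkQ x0 x1 x2 x3) 1 = x1.
Proof. by rewrite /qc /mkQ mxE inordK. Qed.
Lemma qc_mkQ2 x0 x1 x2 x3 : qc (mkQ x0 x1 x2 x3) 2 = x2.
Proof. by rewrite /qc /mkQ mxE inordK. Qed.
Lemma qc_mkQ3 x0 x1 x2 x3 : qc (mkQ x0 x1 x2 x3) 3 = x3.
Proof. by rewrite /qc /mkQ mxE inordK. Qed.

Lemma quatP (x y : quat) : qc x 0 = qc y 0 -> qc x 1 = qc y 1 ->
  qc x 2 = qc y 2 -> qc x 3 = qc y 3 -> x = y.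
Proof.
move=> h0 h1 h2 h3; apply/rowP => i; rewrite -(inord_val i).
case: i => [[|[|[|[|k]]]] //= _] ; by [].
Qed.

Lemma qcD x y k : qc (x + y) k = qc x k + qc y k.
Proof. by rewrite /qc mxE. Qed.
Lemma qcN x k : qc (- x) k = - qc x k.
Proof. by rewrite /qc mxE. Qed.
Lemma qcB x y k : qc (x - y) k = qc x k - qc y k.
Proof. by rewrite qcD qcN. Qed.
Lemma qcZ r x k : qc (r *: x) k = r * qc x k.
Proof. by rewrite /qc mxE. Qed.
Lemma qc0 k : qc 0 k = 0.
Proof. by rewrite /qc mxE. Qed.

Definition qcE := (qc_mkQ0, qc_mkQ1, qc_mkQ2, qc_mkQ3, qcD, qcN, qcB, qcZ, qc0).

Ltac qsolve := apply: quatP; rewrite /qmul /qconj /qscal ?qcE; ring.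

Lemma qmulDl x y z : qmul a b (x + y) z = qmul a b x z + qmul a b y z.
Proof. qsolve. Qed.
Lemma qmulDr x y z : qmul a b x (y + z) = qmul a b x y + qmul a b x z.
Proof. qsolve. Qed.
Lemma qmulZl r x y : qmul a b (r *: x) y = r *: qmul a b x y.
Proof. qsolve. Qed.
Lemma qmulZr r x y : qmul a b x (r *: y) = r *: qmul a b x y.
Proof. qsolve. Qed.
Lemma qmul0l y : qmul a b 0 y = 0.
Proof. qsolve. Qed.
Lemma qmul0r y : qmul a b y 0 = 0.
Proof. qsolve. Qed.
Lemma qmulA x y z : qmul a b x (qmul a b y z) = qmul a b (qmul a b x y) z.
Proof. qsolve. Qed.
Lemma qmul1l x : qmul a b (qscal 1) x = x.
Proof. qsolve. Qed.
Lemma qmul1r x : qmul a b x (qscal 1) = x.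
Proof. qsolve. Qed.
Lemma qconjM x y : qconj (qmul a b x y) = qmul a b (qconj y) (qconj x).
Proof. qsolve. Qed.
Lemma qconjD x y : qconj (x + y) = qconj x + qconj y.
Proof. qsolve. Qed.
Lemma qconjZ r x : qconj (r *: x) = r *: qconj x.
Proof. qsolve. Qed.
Lemma qconjK x : qconj (qconj x) = x.
Proof. qsolve. Qed.
Lemma qconj0 : qconj 0 = 0.
Proof. qsolve. Qed.

Definition qN (x : quat) : rat :=
  qc x 0 ^+ 2 - a * qc x 1 ^+ 2 - b * qc x 2 ^+ 2 + a * b * qc x 3 ^+ 2.

Lemma qmul_conj x : qmul a b x (qconj x) = qscal (qN x).
Proof. rewrite /qN; qsolve. Qed.
Lemma qmul_conjl x : qmul a b (qconj x) x = qscal (qN x).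
Proof. rewrite /qN; qsolve. Qed.
Lemma qconjE x : qconj x = (2 * qc x 0) *: qscal 1 - x.
Proof. qsolve. Qed.
Lemma qNZ r x : qN (r *: x) = r ^+ 2 * qN x.
Proof. rewrite /qN !qcE; ring. Qed.
Lemma qNconj x : qN (qconj x) = qN x.
Proof. rewrite /qN /qconj !qcE; ring. Qed.
Lemma qc_sq0 x : qc (qmul a b x x) 0 = 2 * qc x 0 ^+ 2 - qN x.
Proof. rewrite /qN /qmul !qcE; ring. Qed.
Lemma qc_scal0 r : qc (qscal r) 0 = r.
Proof. by rewrite /qscal qcE. Qed.


Definition M4 (x0 x1 x2 x3 : rat) : 'M[rat]_4 :=
  \matrix_(i < 4, j < 4) nth 0 (nth [::] [::
    [:: x0; x1; x2; x3];
    [:: a*x1; x0; -a*x3; -x2];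
    [:: b*x2; b*x3; x0; x1];
    [:: -a*b*x3; -b*x2; a*x1; x0]] i) j.

Definition Lm (x : quat) := M4 (qc x 0) (qc x 1) (qc x 2) (qc x 3).

Lemma detM4 x0 x1 x2 x3 : \det (M4 x0 x1 x2 x3) =
  (x0^+2 - a*x1^+2 - b*x2^+2 + a*b*x3^+2)^+2.
Proof.
rewrite (expand_det_row _ ord0) !big_ord_recr big_ord0 /= /cofactor.
rewrite !(@expand_det_row _ 3 _ ord0) !big_ord_recr !big_ord0 /= /cofactor.
rewrite !(@expand_det_row _ 2 _ ord0) !big_ord_recr !big_ord0 /= /cofactor.
rewrite !det_mx11 !mxE /=.
ring.
Qed.

Lemma detLm x : \det (Lm x) = qN x ^+ 2.
Proof. by rewrite /Lm detM4. Qed.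

Lemma M4E x0 x1 x2 x3 i j : (i < 4)%N -> (j < 4)%N ->
  M4 x0 x1 x2 x3 (inord i) (inord j) = nth 0 (nth [::] [::
    [:: x0; x1; x2; x3];
    [:: a*x1; x0; -a*x3; -x2];
    [:: b*x2; b*x3; x0; x1];
    [:: -a*b*x3; -b*x2; a*x1; x0]] i) j.
Proof. by move=> hi hj; rewrite mxE !inordK. Qed.

Lemma trLm x : \tr (Lm x) = 4 * qc x 0.
Proof.
rewrite /mxtrace (eq_bigr (fun i : 'I_4 => Lm x (inord i) (inord i))); last first.
  by move=> i _; rewrite inord_val.
rewrite !big_ord_recl big_ord0 /= /Lm !M4E //=; ring.
Qed.

Lemma qc_mulmx (v : quat) M k : qc (v *m M) k = \sum_(i<4) qc v i * M (inord i) (inord k).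
Proof. rewrite /qc mxE; apply eq_bigr => i _; by rewrite inord_val. Qed.

Lemma mulLm (v : quat) x : v *m Lm x = qmul a b x v.
Proof.
apply: quatP; rewrite !qc_mulmx !big_ord_recl big_ord0 /= /Lm !M4E //= /qmul !qcE; ring.
Qed.

End Q.

Require Import Defs.
From mathcomp Require Import all_boot all_order all_algebra.
From mathcomp Require Import ring lra zify.
Set Implicit Arguments. Unset Strict Implicit. Unset Printing Implicit Defensive.
Import Order.TTheory GRing.Theory Num.Theory.
Local Open Scope ring_scope.

Section L.
Variables (a b : rat) (B : 'I_4 -> quat).

Lemma lat0 : in_lattice B 0.
Proof. exists (fun _ => 0); rewrite big1 // => i _; by rewrite scale0r. Qed.

Lemma latD x y : in_lattice B x -> in_lattice B y -> in_lattice B (x + y).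
Proof.
move=> [c ->] [d ->]; exists (fun i => c i + d i); rewrite -big_split /=.
apply: eq_bigr => i _; by rewrite intrD scalerDl.
Qed.

Lemma latZ (z : int) x : in_lattice B x -> in_lattice B (z%:~R *: x).
Proof.
move=> [c ->]; exists (fun i => z * c i); rewrite scaler_sumr.
apply: eq_bigr => i _; by rewrite intrM scalerA.
Qed.

Lemma latN x : in_lattice B x -> in_lattice B (- x).
Proof. by move=> h; rewrite -scaleN1r -[-1]/((-1)%:~R); apply: latZ. Qed.

Lemma latB x y : in_lattice B x -> in_lattice B y -> in_lattice B (x - y).
Proof. by move=> hx hy; apply: latD => //; apply: latN. Qed.

Lemma latZn (n : nat) x : in_lattice B x -> in_lattice B (n%:R *: x).
Proof. by move=> h; rewrite -[n%:R]/((n%:Z)%:~R); apply: latZ. Qed.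

Lemma latbasis i : in_lattice B (B i).
Proof.
exists (fun j => (j == i)%:Z); rewrite (bigD1 i) //= big1 ?addr0 ?eqxx ?scale1r //.
by move=> j /negbTE ->; rewrite scale0r.
Qed.

Definition Pm : 'M[rat]_4 := \matrix_(i < 4, j < 4) B i ord0 j.

Lemma rowPm i : row i Pm = B i.
Proof. by apply/rowP => j; rewrite !mxE (ord1 ord0). Qed.

Lemma Lm_int x : is_order a b B -> in_lattice B x ->
  \det (Lm a b x) \is a Num.int /\ \tr (Lm a b x) \is a Num.int.
Proof.
move=> [hdet [h1 hmul]] hx.
have : forall i, exists c : 'I_4 -> int, qmul a b x (B i) = \sum_(j < 4) (c j)%:~R *: B j.
  by move=> i; apply: hmul => //; apply: latbasis.
case/fin_all_exists => c hc.
pose C' : 'M[int]_4 := \matrix_(i, j) c i j.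
pose C : 'M[rat]_4 := map_mx intr C'.
have hPC : Pm *m Lm a b x = C *m Pm.
  apply/row_matrixP => i; rewrite !row_mul rowPm mulLm hc mulmx_sum_row.
  apply: eq_bigr => j _; by rewrite rowPm !mxE.
have hu : Pm \in unitmx by rewrite unitmxE unitfE.
split.
  have : \det Pm * \det (Lm a b x) = \det C * \det Pm by rewrite -!det_mulmx hPC.
  rewrite mulrC => /(mulIf hdet) ->.
  by rewrite det_map_mx rpred_int.
have -> : Lm a b x = invmx Pm *m (C *m Pm) by rewrite -hPC mulKmx.
rewrite mxtrace_mulC -mulmxA mulmxV // mulmx1 /mxtrace.
apply: rpred_sum => i _; by rewrite mxE rpred_int.
Qed.

End L.

From mathcomp Require Import all_boot all_order all_algebra.
From mathcomp Require Import ring lra zify.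
Set Implicit Arguments. Unset Strict Implicit. Unset Printing Implicit Defensive.
Import Order.TTheory GRing.Theory Num.Theory.
Local Open Scope ring_scope.

Lemma even_sq (v y : int) : v * v = 2 * y -> exists k, v = 2 * k.
Proof.
move=> h; exists (v %/ 2)%Z.
have := divz_eq v 2; have := modz_ge0 v (isT : (2:int) != 0); have := ltz_pmod v (isT : (0:int) < 2).
set r := (v %% 2)%Z; set k := (v %/ 2)%Z => h1 h2 h3.
have : r = 0 \/ r = 1 by lia.
case=> hr; first by rewrite h3 hr; lia.
exfalso; rewrite h3 hr in h; nia.
Qed.

Lemma sq_int (s : rat) : s ^+ 2 \is a Num.int -> s \is a Num.int.
Proof.
case/intrP => z hz.
rewrite Qint_def.
have hn := numqE s.
have e : ((numq s) ^+ 2)%:~R = (z * (denq s) ^+ 2)%:~R :> rat.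
  by rewrite !expr2 !intrM hn -hz; ring.
have {}e : numq s ^+ 2 = z * denq s ^+ 2 by apply: (@intr_inj rat).
have cop := coprime_num_den s.
have hd : (`|denq s| ^ 2 %| `|numq s| ^ 2)%N.
  by apply/dvdnP; exists `|z|%N; rewrite -!abszX e abszM.
have : (`|denq s| ^ 2 %| 1)%N.
  by rewrite -[X in (_ %| X)%N](eqP (coprimeXr 2 (coprimeXl 2 cop))) dvdn_gcd hd dvdnn.
rewrite dvdn1 => /eqP h.
have : `|denq s|%N = 1%N by case: (`|denq s|%N) h => [|[|n]] //=; rewrite ?expnS; lia.
move=> h2; apply/eqP; rewrite -(gtr0_norm (denq_gt0 s)) -abszE; lia.
Qed.

Lemma half_int (w : rat) : (2 * w) \is a Num.int -> (2 * w ^+ 2) \is a Num.int ->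
  w \is a Num.int.
Proof.
case/intrP => v hv; case/intrP => y hy.
have e : v * v = 2 * y.
  apply: (@intr_inj rat); rewrite !intrM -hv -hy; ring.
case: (even_sq e) => k hk.
apply/intrP; exists k.
have : 2 * w = 2 * k%:~R by rewrite hv hk intrM.
by move/(mulfI (isT : (2:rat) != 0)).
Qed.

Require Import Defs.
From mathcomp Require Import all_boot all_order all_algebra.
From mathcomp Require Import ring lra zify.
Set Implicit Arguments. Unset Strict Implicit. Unset Printing Implicit Defensive.
Import Order.TTheory GRing.Theory Num.Theory.
Local Open Scope ring_scope.

Section O.
Variables (a b : rat) (B : 'I_4 -> quat).
Hypothesis ho : is_order a b B.

Lemma lat1 : in_lattice B (qscal 1).
Proof. by case: ho => _ []. Qed.

Lemma latM x y : in_lattice B x -> in_lattice B y -> in_lattice B (qmul a b x y).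
Proof. by case: ho => _ [] _; apply. Qed.

Lemma ord_int x : in_lattice B x ->
  (2 * qc x 0) \is a Num.int /\ qN a b x \is a Num.int.
Proof.
move=> hx.
have [d1 t1] := Lm_int ho hx; rewrite detLm in d1; rewrite trLm in t1.
have hN := sq_int d1.
have [_ t2] := Lm_int ho (latM hx hx); rewrite trLm qc_sq0 in t2.
split => //; apply: half_int.
  by have -> : 2 * (2 * qc x 0) = 4 * qc x 0 by ring.
have -> : 2 * (2 * qc x 0) ^+ 2 = 4 * (2 * qc x 0 ^+ 2 - qN a b x) + 4 * qN a b x by ring.
by apply: rpredD => //; apply: rpredM.
Qed.

Lemma lat_conj x : in_lattice B x -> in_lattice B (qconj x).
Proof.
move=> hx; rewrite qconjE; have [/intrP [z ->] _] := ord_int hx.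
by apply: latB => //; apply: latZ; apply: lat1.
Qed.

Lemma locO q x : prime q -> in_lattice B x -> loc_at B q x.
Proof.
move=> pq hx; exists 1%N; split => //; split; last by rewrite scale1r.
by rewrite dvdn1; apply/negP => /eqP h; move: pq; rewrite h.
Qed.

Lemma locD q x y : prime q -> loc_at B q x -> loc_at B q y -> loc_at B q (x + y).
Proof.
move=> pq [d [d0 [qd hd]]] [e [e0 [qe he]]]; exists (d * e)%N; split; first by rewrite muln_gt0 d0.
split; first by rewrite Euclid_dvdM // negb_or qd.
have -> : (d * e)%N%:R *: (x + y) = e%:R *: (d%:R *: x) + d%:R *: (e%:R *: y).
  by rewrite !scalerA natrM scalerDr mulrC.
by apply: latD; apply: latZn.
Qed.

Lemma locMl q x y : loc_at B q x -> in_lattice B y -> loc_at B q (qmul a b x y).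
Proof.
move=> [d [d0 [qd hd]]] hy; exists d; split => //; split => //.
by rewrite -qmulZl; apply: latM.
Qed.

Lemma locMr q x y : in_lattice B x -> loc_at B q y -> loc_at B q (qmul a b x y).
Proof.
move=> hx [d [d0 [qd hd]]]; exists d; split => //; split => //.
by rewrite -qmulZr; apply: latM.
Qed.

Lemma loc_glob x : (forall q, prime q -> loc_at B q x) -> in_lattice B x.
Proof.
move=> H.
have [d [d0 [_ hd]]] := H 2%N isT.
suff: forall n, (0 < n)%N -> in_lattice B (n%:R *: x) -> in_lattice B x by apply; eauto.
elim/ltn_ind => n IH n0 hn.
case: (ltnP 1 n) => [n1|n1]; last first.
  have e : n = 1%N by lia.
  by rewrite e scale1r in hn.
have pq := pdiv_prime n1; have qn := pdiv_dvd n.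
have [e [e0 [qe he]]] := H _ pq.
have g0 : (0 < gcdn n e)%N by rewrite gcdn_gt0 n0.
apply: (IH (gcdn n e)) => //.
  rewrite ltn_neqAle dvdn_leq ?dvdn_gcdl // andbT.
  apply/negP => /eqP hg; have ne : (n %| e)%N by rewrite -hg dvdn_gcdr.
  by rewrite (dvdn_trans qn ne) in qe.
have [u [v huv]] := Bezoutz n e.
have -> : (gcdn n e)%:R *: x = u%:~R *: (n%:R *: x) + v%:~R *: (e%:R *: x).
  rewrite !scalerA -scalerDl; congr (_ *: _).
  have -> : (gcdn n e)%:R = (gcdz n e)%:~R :> rat by [].
  by rewrite -huv intrD !intrM.
by apply: latD; apply: latZ.
Qed.

End O.

Require Import Defs.
From mathcomp Require Import all_boot all_order all_algebra.
From mathcomp Require Import ring lra zify.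
Set Implicit Arguments. Unset Strict Implicit. Unset Printing Implicit Defensive.
Import Order.TTheory GRing.Theory Num.Theory.
Local Open Scope ring_scope.

Lemma sum2 (F : 'I_2 -> quat) : \sum_(k < 2) F k = F ord0 + F ord_max.
Proof.
rewrite big_ord_recr big_ord1 /=; congr (F _ + _); exact: val_inj.
Qed.

Lemma ord2 (i : 'I_2) : i = ord0 \/ i = ord_max.
Proof. case: i => [[|[|k]] h]; [left|right|]; try exact: val_inj; done. Qed.

Section M.
Variables a b : rat.

Lemma qmul_scalr x r : qmul a b x (qscal r) = r *: x.
Proof. apply: quatP; rewrite /qmul /qscal !qcE; ring. Qed.
Lemma qmul_scall x r : qmul a b (qscal r) x = r *: x.
Proof. apply: quatP; rewrite /qmul /qscal !qcE; ring. Qed.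

Lemma mmulA g h m i j : mmul a b (mmul a b g h) m i j = mmul a b g (mmul a b h m) i j.
Proof.
rewrite /mmul !sum2 !qmulDl !qmulDr !qmulA; by rewrite addrACA.
Qed.

Lemma vmulA v g h j : vmul a b (vmul a b v g) h j = vmul a b v (mmul a b g h) j.
Proof.
rewrite /vmul /mmul !sum2 !qmulDl !qmulDr !qmulA; by rewrite addrACA.
Qed.

Lemma mmul_meql g g' h i j : meq g g' -> mmul a b g h i j = mmul a b g' h i j.
Proof. by move=> H; rewrite /mmul; apply: eq_bigr => k _; rewrite H. Qed.
Lemma mmul_meqr g h h' i j : meq h h' -> mmul a b g h i j = mmul a b g h' i j.
Proof. by move=> H; rewrite /mmul; apply: eq_bigr => k _; rewrite H. Qed.
Lemma vmul_meq v g g' j : meq g g' -> vmul a b v g j = vmul a b v g' j.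
Proof. by move=> H; rewrite /vmul; apply: eq_bigr => k _; rewrite H. Qed.

Lemma mmul_scalr g r i j : mmul a b g (scalM r) i j = r *: g i j.
Proof.
rewrite /mmul sum2 /scalM; case: (ord2 i) => ->; case: (ord2 j) => ->;
  rewrite /= ?qmul0r ?qmul_scalr ?addr0 ?add0r //.
Qed.
Lemma mmul_scall g r i j : mmul a b (scalM r) g i j = r *: g i j.
Proof.
rewrite /mmul sum2 /scalM; case: (ord2 i) => ->; case: (ord2 j) => ->;
  rewrite /= ?qmul0l ?qmul_scall ?addr0 ?add0r //.
Qed.
Lemma vmul_scal v r j : vmul a b v (scalM r) j = r *: v j.
Proof.
rewrite /vmul sum2 /scalM; case: (ord2 j) => ->;
  rewrite /= ?qmul0r ?qmul_scalr ?addr0 ?add0r //.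
Qed.

Definition ev (i : 'I_2) : 'I_2 -> quat := fun k => if k == i then qscal 1 else 0.

Lemma vmul_ev i g j : vmul a b (ev i) g j = g i j.
Proof.
rewrite /vmul sum2 /ev; case: (ord2 i) => ->;
  rewrite /= ?qmul0l ?qmul1l ?addr0 ?add0r //.
Qed.


Section Pos.
Hypotheses (ha : a < 0) (hb : b < 0).

Lemma qN_ge0 x : 0 <= qN a b x.
Proof.
rewrite /qN.
have t0 := sqr_ge0 (qc x 0); have t1 := sqr_ge0 (qc x 1).
have t2 := sqr_ge0 (qc x 2); have t3 := sqr_ge0 (qc x 3).
have u1 : 0 <= (- a) * qc x 1 ^+ 2 by apply: mulr_ge0 => //; rewrite oppr_ge0 ltW.
have u2 : 0 <= (- b) * qc x 2 ^+ 2 by apply: mulr_ge0 => //; rewrite oppr_ge0 ltW.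
have u3 : 0 <= a * b * qc x 3 ^+ 2 by apply: mulr_ge0 => //; apply: ltW; rewrite nmulr_rgt0.
lra.
Qed.

Lemma qN_eq0 x : qN a b x = 0 -> x = 0.
Proof.
rewrite /qN => h.
have t0 := sqr_ge0 (qc x 0); have t1 := sqr_ge0 (qc x 1).
have t2 := sqr_ge0 (qc x 2); have t3 := sqr_ge0 (qc x 3).
have u1 : 0 <= (- a) * qc x 1 ^+ 2 by apply: mulr_ge0 => //; rewrite oppr_ge0 ltW.
have u2 : 0 <= (- b) * qc x 2 ^+ 2 by apply: mulr_ge0 => //; rewrite oppr_ge0 ltW.
have u3 : 0 <= a * b * qc x 3 ^+ 2 by apply: mulr_ge0 => //; apply: ltW; rewrite nmulr_rgt0.
have v1 : (- a) * qc x 1 ^+ 2 = 0 by lra.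
have v2 : (- b) * qc x 2 ^+ 2 = 0 by lra.
have v3 : a * b * qc x 3 ^+ 2 = 0 by lra.
have h0 : qc x 0 ^+ 2 = 0 by lra.
have e0 : qc x 0 = 0 by move/eqP: h0; rewrite expf_eq0 /= => /eqP.
have e1 : qc x 1 = 0.
  by move/eqP: v1; rewrite !mulf_eq0 oppr_eq0 (lt_eqF ha) /= orbb => /eqP.
have e2 : qc x 2 = 0.
  by move/eqP: v2; rewrite !mulf_eq0 oppr_eq0 (lt_eqF hb) /= orbb => /eqP.
have e3 : qc x 3 = 0.
  by move/eqP: v3; rewrite !mulf_eq0 (lt_eqF ha) (lt_eqF hb) /= orbb => /eqP.
by apply: quatP; rewrite qc0.
Qed.

End Pos.

Lemma qNM x y : qN a b (qmul a b x y) = qN a b x * qN a b y.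
Proof. rewrite /qN /qmul !qcE; ring. Qed.

Lemma simil_entry g mu i j : simil a b g mu ->
  \sum_(k < 2) qmul a b (g i k) (qconj (g j k)) = scalM mu i j.
Proof. by move=> H; rewrite -H. Qed.

Lemma simil00 g mu : simil a b g mu ->
  mu = qN a b (g ord0 ord0) + qN a b (g ord0 ord_max).
Proof.
move=> H; have := simil_entry ord0 ord0 H; rewrite sum2 !qmul_conj /scalM eqxx.
move/(congr1 (fun x => qc x 0)); rewrite qcD !qc_scal0 => ->; done.
Qed.


Lemma qscalD r s : qscal r + qscal s = qscal (r + s).
Proof. apply: quatP; rewrite /qscal !qcE; ring. Qed.
Lemma qNN x : qN a b (- x) = qN a b x.
Proof. rewrite /qN !qcE; ring. Qed.
Lemma qscal_inj r s : qscal r = qscal s -> r = s.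
Proof. by move/(congr1 (fun x => qc x 0)); rewrite !qc_scal0. Qed.

Lemma linv g : a < 0 -> b < 0 -> simil a b g 1 -> meq (mmul a b (conjT g) g) (scalM 1).
Proof.
move=> ha hb H.
have E00 := simil_entry ord0 ord0 H; have E11 := simil_entry ord_max ord_max H.
have E01 := simil_entry ord0 ord_max H.
rewrite sum2 !qmul_conj /scalM /= qscalD in E00.
rewrite sum2 !qmul_conj /scalM /= qscalD in E11.
rewrite sum2 /scalM /= in E01.
move/qscal_inj: E00 => E00; move/qscal_inj: E11 => E11.
set g00 := g ord0 ord0 in E00 E01 *; set g01 := g ord0 ord_max in E00 E01 *.
set g10 := g ord_max ord0 in E11 E01 *; set g11 := g ord_max ord_max in E11 E01 *.
have E01' : qmul a b g00 (qconj g10) = - qmul a b g01 (qconj g11).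
  by apply/eqP; rewrite -subr_eq0 opprK E01.
have hAC : qN a b g00 * qN a b g10 = qN a b g01 * qN a b g11.
  by move/(congr1 (qN a b)): E01'; rewrite qNN !qNM !qNconj.
have hAC2 : qN a b g00 + qN a b g10 = 1 by nra.
have hBD2 : qN a b g01 + qN a b g11 = 1 by nra.
pose X := mmul a b (conjT g) g.
have X00 : X ord0 ord0 = qscal 1.
  by rewrite /X /mmul sum2 /conjT !qmul_conjl qscalD hAC2.
have X11 : X ord_max ord_max = qscal 1.
  by rewrite /X /mmul sum2 /conjT !qmul_conjl qscalD hBD2.
have X10 : X ord_max ord0 = qconj (X ord0 ord_max).
  by rewrite /X /mmul !sum2 /conjT qconjD !qconjM !qconjK.
have gX : meq (mmul a b g X) g.
  move=> i j; rewrite /X -mmulA (mmul_meql _ _ _ H) mmul_scall scale1r //.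
have XX : meq (mmul a b X X) X.
  move=> i j; rewrite {1}/X mmulA (mmul_meqr _ _ _ gX) //.
have z0 : X ord0 ord_max = 0.
  have := XX ord0 ord0; rewrite {1}/mmul sum2 X00 X10 qmul_scall scale1r qmul_conj.
  move/(congr1 (fun x => qc x 0)); rewrite qcD !qc_scal0 => h.
  by apply: (qN_eq0 ha hb); lra.
move=> i j; case: (ord2 i) => ->; case: (ord2 j) => -> /=.
- by rewrite -/X X00.
- by rewrite -/X z0.
- by rewrite -/X X10 z0 qconj0.
- by rewrite -/X X11.
Qed.

End M.

Require Import Defs.
From mathcomp Require Import all_boot all_order all_algebra.
From mathcomp Require Import ring lra zify.
Set Implicit Arguments. Unset Strict Implicit. Unset Printing Implicit Defensive.
Import Order.TTheory GRing.Theory Num.Theory.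
Local Open Scope ring_scope.

Section Main.
Variables (a b : rat) (B : 'I_4 -> quat).
Hypotheses (ha : a < 0) (hb : b < 0) (ho : is_order a b B).

Lemma vmul_ext v v' g j : (forall k, v k = v' k) -> vmul a b v g j = vmul a b v' g j.
Proof. by move=> H; rewrite /vmul; apply: eq_bigr => k _; rewrite H. Qed.

Lemma GL_of_SU g : in_M2O B g -> in_SU2 a b g -> in_GL2O a b B g.
Proof.
move=> hg hs; split => //; exists (conjT g); split.
  by move=> i j; apply: (lat_conj ho); apply: hg.
by split => //; apply: linv.
Qed.

Lemma loc_vmul q v g j : prime q -> in_M2O B g -> (forall i, loc_at B q (v i)) ->
  loc_at B q (vmul a b v g j).
Proof.
move=> pq hg hv; rewrite /vmul sum2.
by apply: locD => //; apply: locMl => //; apply: hg.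
Qed.

Lemma dir2 g : in_SU2 a b g /\ in_GL2O a b B g -> in_Gamma1 a b B g.
Proof.
move=> [hs [hg [h [hh [_ hhg]]]]]; split; first by exists 1; split.
move=> q pq; split.
  by move=> v hv j; apply: loc_vmul.
move=> w hw; exists (fun j => vmul a b w h j); split.
  by move=> i; apply: loc_vmul.
move=> j; rewrite vmulA (@vmul_meq a b _ _ _ _ hhg) vmul_scal scale1r //.
Qed.

Lemma dir3 g : in_SU2 a b g /\ in_GL2O a b B g -> in_GU2O a b B g.
Proof.
move=> [hs [hg _]]; split; first by exists 1; split.
by split => //; exists 1; split => //; left.
Qed.

Lemma dir4 g : in_GU2O a b B g -> in_SU2 a b g /\ in_GL2O a b B g.
Proof.
move=> [_ [hg [mu [hs hmu]]]].
have hs1 : in_SU2 a b g.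
  case: hmu => hmu; first by rewrite /in_SU2 -hmu.
  have := simil00 hs; rewrite hmu => e.
  have := qN_ge0 ha hb (g ord0 ord0); have := qN_ge0 ha hb (g ord0 ord_max); lra.
by split => //; apply: GL_of_SU.
Qed.


Lemma loc_ev q i k : prime q -> loc_at B q (ev i k).
Proof.
move=> pq; rewrite /ev; case: (k == i).
  by apply: locO => //; apply: (lat1 ho).
by apply: locO => //; apply: lat0.
Qed.

Lemma dir1 g : in_Gamma1 a b B g -> in_SU2 a b g /\ in_GL2O a b B g.
Proof.
move=> [[mu [mu0 hs]] hst].
have hg : in_M2O B g.
  move=> i j; apply: (loc_glob (B:=B)) => q pq.
  have [h1 _] := hst q pq.
  have := h1 (ev i) (fun k => loc_ev i k pq) j.
  by rewrite vmul_ev.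
have hO : forall i j, in_lattice B (mu^-1 *: qconj (g j i)).
  move=> i j; apply: (loc_glob (B:=B)) => q pq.
  have [_ h2] := hst q pq.
  have [v [hv hvg]] := h2 (ev i) (fun k => loc_ev i k pq).
  suff -> : mu^-1 *: qconj (g j i) = v j by apply: hv.
  have e : mu *: v j = qconj (g j i).
    rewrite -(@vmul_scal a b).
    rewrite (@vmul_meq a b v _ (mmul a b g (conjT g)) j (fun i j => esym (hs i j))).
    rewrite -vmulA (vmul_ext _ _ hvg) vmul_ev //.
  by rewrite -e scalerA mulVf // scale1r.
have muZ : mu \is a Num.int.
  rewrite (simil00 hs); apply: rpredD.
    by case: (ord_int ho (hg ord0 ord0)).
  by case: (ord_int ho (hg ord0 ord_max)).
have muVZ : mu^-1 \is a Num.int.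
  have -> : mu^-1 = qN a b (mu^-1 *: qconj (g ord0 ord0)) +
                     qN a b (mu^-1 *: qconj (g ord0 ord_max)).
    rewrite !qNZ !qNconj -mulrDr -(simil00 hs) expr2 -mulrA mulVf //.
    by rewrite mulr1.
  apply: rpredD.
    by case: (ord_int ho (hO ord0 ord0)).
  by case: (ord_int ho (hO ord_max ord0)).
have mupos : 0 < mu.
  rewrite lt0r mu0 /= (simil00 hs); apply: addr_ge0; exact: qN_ge0.
have mu1 : mu = 1.
  move: muZ muVZ mupos => /intrP [z hz] /intrP [w hw] hpos.
  have e : (z * w)%:~R = (1%:~R : rat) by rewrite intrM -hz -hw mulfV.
  have {}e : z * w = 1 by apply: (@intr_inj rat).
  have z0 : 0 < z by rewrite hz ltr0z in hpos.
  have w0 : 0 < w by rewrite -(pmulr_rgt0 _ z0) e.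
  have z1 : z = 1 by nia.
  by rewrite hz z1.
have hs1 : in_SU2 a b g by rewrite /in_SU2 -mu1.
by split => //; apply: GL_of_SU.
Qed.

End Main.

Unset Implicit Arguments.

Theorem lemma5p2 (p : nat) (a b : rat) (B : 'I_4 -> quat) :
  prime p -> a != 0 -> b != 0 ->
  ramified_exactly_at_p_infty a b p ->
  is_maximal_order a b B ->
  forall g : M2,
    (in_Gamma1 a b B g <-> in_SU2 a b g /\ in_GL2O a b B g) /\
    (in_SU2 a b g /\ in_GL2O a b B g <-> in_GU2O a b B g).
Proof.
move=> _ _ _ [[ha hb] _] [ho _] g.
split; split.
- exact: (dir1 ha hb ho).
- exact: (dir2 ho).
- exact: dir3.
- exact: (dir4 ha hb ho).
Qed.
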